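(* Let $k$ be even, $d\ge1$, $\ell\ge1$, $n\ge1$, $p\in[0,1]$, and let $\Phi$ be a random $k$-XOR instance with probability $p$. Then $$\mathbb{E}\,\mathrm{tr}\big((R^{\Phi,d})^{2\ell}\big)\le\frac{1}{((kd/2)!)^{2\ell}}\sum_{\mathcal{Q}\text{ even}}\Big[\big(p\,(kd/2)^{k/2}\big)^{|\mathcal{Q}|}\sum_{\{I_j\}\ \mathcal{Q}\text{-valid}}\ \prod_{j=1}^{2\ell}\mathrm{hist}(I_j)!\Big],$$ where the outer sum is over all even partitions $\mathcal{Q}$ of $\mathcal{I}=\{(j,s):j\in[2\ell],s\in[d]\}$ and the inner sum over all $\mathcal{Q}$-valid collections $\{I_j\}_{j=1}^{2\ell}$ of tuples in $[n]^{kd/2}$.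
   Context: Random $k$-XOR with probability $p$: each of the $n^k$ tuples $S\in[n]^k$ is independently included with probability $p$; for each included $S=(s_1,\dots,s_k)$ a constraint $\prod_{i=1}^k x_{s_i}=\eta_S$ is added, with $\eta_S$ i.i.d. uniform in $\{\pm1\}$. The constraint tensor $T$ has $T_S=\eta_S$ if $S$ is included and $T_S=0$ otherwise. $M^\Phi$ is the $n^{k/2}\times n^{k/2}$ matrix with rows/columns indexed by $[n]^{k/2}$ and $M^\Phi_{U,V}=T_{(U,V)}$ ($(U,V)$ the concatenation). $S^\Phi=\frac12(M^\Phi+(M^\Phi)^\top)$. For $d\ge1$, $S^{\Phi,d}$ has rows/columns indexed by $[n]^{kd/2}$, each tuple written as a concatenation $(U_1,\dots,U_d)$ of blocks in $[n]^{k/2}$, and $S^{\Phi,d}_{(U_1,\dots,U_d),(V_1,\dots,V_d)}=\prod_{s=1}^dS^\Phi_{U_s,V_s}$. For $I=(i_1,\dots,i_q)$ and $\pi\in\mathbb{S}_q$ (permutations of $[q]$), $\pi(I)=(i_{\pi(1)},\dots,i_{\pi(q)})$. Then $R^{\Phi,d}_{I,J}=\frac{1}{((kd/2)!)^2}\sum_{\pi,\sigma\in\mathbb{S}_{kd/2}}S^{\Phi,d}_{\pi(I),\sigma(J)}$. $\mathrm{hist}(I)=(\alpha_1,\dots,\alpha_n)$ with $\alpha_i$ the number of occurrences of $i$ in $I$; $\mathrm{hist}(I)!=\prod_i\alpha_i!$. Given $I_1,\dots,I_{2\ell}\in[n]^{kd/2}$ (indices modulo $2\ell$) and $\pi_j,\sigma_j\in\mathbb{S}_{kd/2}$,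 let $A_{j,s}$ be the $s$-th block of $\pi_j(I_j)$ and $B_{j,s}$ the $s$-th block of $\sigma_j(I_{j+1})$. $\mathrm{Par}(\{I_j\},\{\pi_j\},\{\sigma_j\})$ is the partition of $\mathcal{I}$ into classes of the relation $(j,s)\sim(j',s')$ iff $(A_{j,s},B_{j,s})=(A_{j',s'},B_{j',s'})$ or $=(B_{j',s'},A_{j',s'})$; $|\mathcal{Q}|$ denotes the number of classes. A partition is even if all classes have even size. $\{I_j\}$ is $\mathcal{Q}$-valid if there exist $\{\sigma_j\}$ with $\mathrm{Par}(\{I_j\},\{\mathrm{id}\},\{\sigma_j\})=\mathcal{Q}$ ($\{\mathrm{id}\}$: all $\pi_j$ identity). *)

(* Defs.v *)
From HB Require Import structures.
From mathcomp Require Import all_boot all_order all_algebra all_fingroup.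

Import Order.TTheory GRing.Theory Num.Theory.
Local Open Scope ring_scope.

(* An outcome of the random k-XOR instance on [n] : for every tuple S in [n]^k,
   an inclusion bit (first component) and a sign bit eta_S (second component,
   true = +1, false = -1). *)
Definition outcome (n k : nat) : finType :=
  ({ffun k.-tuple 'I_n -> bool} * {ffun k.-tuple 'I_n -> bool})%type.

Definition prob_outcome (R : numFieldType) (n k : nat) (p : R) (w : outcome n k) : R :=
  \prod_(S : k.-tuple 'I_n) ((if w.1 S then p else 1 - p) * 2^-1).

Definition expect (R : numFieldType) (n k : nat) (p : R) (X : outcome n k -> R) : R :=
  \sum_(w : outcome n k) prob_outcome R n k p w * X w.

(* Constraint tensor T, applied to a sequence (0 if it is not of length k). *)
Definition tensorT (R : numFieldType) (n k : nat) (w : outcome n k) (S : seq 'I_n) : R :=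
  match (insub S : option (k.-tuple 'I_n)) with
  | Some t => if w.1 t then (if w.2 t then 1 else -1) else 0
  | None => 0
  end.

Definition Mphi (R : numFieldType) n k (w : outcome n k) (U V : seq 'I_n) : R :=
  tensorT R n k w (U ++ V).

Definition Sphi (R : numFieldType) n k (w : outcome n k) (U V : seq 'I_n) : R :=
  (Mphi R n k w U V + Mphi R n k w V U) / 2.

(* s-th block (0-based) of length h of a tuple *)
Definition block (n h : nat) (s : nat) (I : seq 'I_n) : seq 'I_n :=
  take h (drop (s * h) I).

Definition SphiD (R : numFieldType) n k (d : nat) (w : outcome n k) (I J : seq 'I_n) : R :=
  \prod_(s < d) Sphi R n k w (block n (k./2) s I) (block n (k./2) s J).

Definition permute (n m : nat) (pi : 'S_m) (I : m.-tuple 'I_n) : m.-tuple 'I_n :=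
  [tuple tnth I (pi j) | j < m].

Definition RphiD (R : numFieldType) n k d (w : outcome n k)
    (I J : (k./2 * d).-tuple 'I_n) : R :=
  (((k./2 * d)`!)%:R ^+ 2)^-1 *
  \sum_(pi : 'S_(k./2 * d)) \sum_(sg : 'S_(k./2 * d))
     SphiD R n k d w (permute n _ pi I) (permute n _ sg J).

Definition Rmat (R : numFieldType) n k d (w : outcome n k) :
    'M[R]_#|{: (k./2 * d).-tuple 'I_n}| :=
  \matrix_(i, j) RphiD R n k d w (enum_val i) (enum_val j).

Definition histfact (n : nat) (I : seq 'I_n) : nat :=
  \prod_(i : 'I_n) (count_mem i I)`!.

(* (A_{j,s}, B_{j,s}): s-th blocks of pi_j(I_j) and sigma_j(I_{j+1}),
   indices j taken modulo 2l (ordS is the cyclic successor on 'I_L). *)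
Definition pairAB (n k d L : nat)
    (Is : {ffun 'I_L -> (k./2 * d).-tuple 'I_n})
    (pis sgs : {ffun 'I_L -> 'S_(k./2 * d)}) (x : 'I_L * 'I_d)
    : seq 'I_n * seq 'I_n :=
  (block n (k./2) x.2 (permute n _ (pis x.1) (Is x.1)),
   block n (k./2) x.2 (permute n _ (sgs x.1) (Is (ordS x.1)))).

Definition ParRel (n k d L : nat) Is pis sgs : rel ('I_L * 'I_d) :=
  fun x y => (pairAB n k d L Is pis sgs x == pairAB n k d L Is pis sgs y) ||
             (pairAB n k d L Is pis sgs x ==
                ((pairAB n k d L Is pis sgs y).2, (pairAB n k d L Is pis sgs y).1)).

Definition Par (n k d L : nat) Is pis sgs : {set {set 'I_L * 'I_d}} :=
  equivalence_partition (ParRel n k d L Is pis sgs) [set: 'I_L * 'I_d].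

Definition idperms (L m : nat) : {ffun 'I_L -> 'S_m} := [ffun => 1%g].

Definition Qvalid (n k d L : nat) (Q : {set {set 'I_L * 'I_d}})
    (Is : {ffun 'I_L -> (k./2 * d).-tuple 'I_n}) : bool :=
  [exists sgs : {ffun 'I_L -> 'S_(k./2 * d)}, Par n k d L Is (idperms L _) sgs == Q].

Definition even_partition (L d : nat) (Q : {set {set 'I_L * 'I_d}}) : bool :=
  partition Q [set: 'I_L * 'I_d] && [forall B in Q, ~~ odd #|B|].

(* Main.v *)
Require Import Defs.
From HB Require Import structures.
From mathcomp Require Import all_boot all_order all_algebra all_fingroup.
From mathcomp Require Import ring.
Import Order.TTheory GRing.Theory Num.Theory.
Lemma count_tuple_card n m (I : m.-tuple 'I_n) (i : 'I_n) :
  count_mem i I = #|[pred x : 'I_m | tnth I x == i]|.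
Proof.
rewrite -{1}(map_tnth_enum I) count_map -sum1_count -sum1_card.
by rewrite big_enum_cond /= big_mkcond [RHS]big_mkcond.
Qed.

Section Stab.
Variables (n m : nat) (c : 'I_m -> 'I_n).
Definition Kc (i : 'I_n) : finType := {x : 'I_m | c x == i}.
Definition Injc (i : 'I_n) : finType := {f : {ffun Kc i -> Kc i} | injectiveb f}.
Lemma idinj i : injectiveb [ffun x : Kc i => x].
Proof. by apply/injectiveP => x y; rewrite !ffunE. Qed.
Definition Phi (tau : {perm 'I_m}) : {dffun forall i, Injc i} :=
  [ffun i => insubd (Sub [ffun x => x] (idinj i) : Injc i)
        [ffun x : Kc i => insubd x (tau (val x))]].

Lemma card_stab :
  #|[set tau : {perm 'I_m} | [forall y, c (tau y) == c y]]| <=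
  \prod_(i : 'I_n) (#|[pred x | c x == i]|)`!.
Proof.
set St := [set _ | _].
have inj1 : forall t : {perm 'I_m}, [forall y, c (t y) == c y] ->
    forall i, injectiveb [ffun x : Kc i => insubd x (t (val x))].
  move=> t /forallP Ht i; apply/injectiveP => x1 x2; rewrite !ffunE => e.
  have := congr1 val e; rewrite !insubdK; last 2 first.
      by rewrite -topredE /= (eqP (Ht _)); exact: (valP x2).
    by rewrite -topredE /= (eqP (Ht _)); exact: (valP x1).
  by move/perm_inj/val_inj.
have injP : {in St &, injective Phi}.
  move=> t1 t2; rewrite !inE => H1' H2' E.
  have /forallP H1 := H1'; have /forallP H2 := H2'.
  apply/permP => y.
  have E1 : Phi t1 (c y) = Phi t2 (c y) by rewrite E.
  rewrite /Phi !ffunE in E1.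
  have E2 := congr1 val E1; rewrite !insubdK in E2; try (by rewrite -topredE /=; apply: inj1).
  have := congr1 (fun f : {ffun Kc (c y) -> Kc (c y)} => val (f (Sub y (eqxx (c y))))) E2.
  rewrite /= !ffunE !insubdK //=.
    by rewrite -topredE /= (eqP (H2 _)).
  by rewrite -topredE /= (eqP (H1 _)).
rewrite -(card_in_imset injP).
apply: (leq_trans (max_card _)).
rewrite card_dep_ffun foldrE big_map big_enum /=.
apply: leq_prod => i _.
rewrite card_sig -(card_sig (fun x => c x == i)) -ffactnn -card_inj_ffuns.
by apply: subset_leq_card; apply/subsetP => f; rewrite !inE.
Qed.
End Stab.
Lemma card_fib n m (I B : m.-tuple 'I_n) :
  #|[set sg : 'S_m | permute n m sg I == B]| <= histfact n I.
Proof.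
set F := [set _ | _].
have [->|[sg0 Hsg0]] := set_0Vmem F; first by rewrite cards0.
have Hp : forall sg, sg \in F -> forall j, tnth I (sg j) = tnth B j.
  move=> sg; rewrite inE => /eqP <- j; by rewrite tnth_mktuple.
have injh : injective (fun sg : 'S_m => (sg0^-1 * sg)%g) by apply: mulgI.
rewrite -(card_imset _ injh) /histfact.
under eq_bigr => i _ do rewrite count_tuple_card.
apply: leq_trans (card_stab _ _ (tnth I)).
apply/subset_leq_card/subsetP => _ /imsetP[sg Hsg ->].
rewrite inE; apply/forallP => y; rewrite permM.
by rewrite (Hp _ Hsg) -(Hp _ Hsg0) permKV.
Qed.
Set Implicit Arguments. Unset Strict Implicit. Unset Printing Implicit Defensive.
Lemma card_by_fun (A B : finType) (S : {set A}) (g : A -> B) :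
  #|S| = \sum_(b : B) #|[set x in S | g x == b]|.
Proof.
rewrite -sum1_card (partition_big g predT) //=.
by apply: eq_bigr => b _; rewrite -sum1_card; apply: eq_bigl => x; rewrite !inE.
Qed.

Lemma prod_nat_bool (I : finType) (b : I -> bool) :
  \prod_i (b i : nat) = [forall i, b i].
Proof.
case: (boolP [forall i, b i]) => [/forallP H | /forallPn [i Hi]].
  by rewrite big1 // => i _; rewrite H.
by rewrite (bigD1 i) //= (negbTE Hi).
Qed.

Lemma card_ffun_pred (I J : finType) (P : I -> pred J) :
  #|[set f : {ffun I -> J} | [forall i, P i (f i)]]| = \prod_i #|P i|.
Proof.
have E : forall i, #|P i| = \sum_j (P i j : nat).
  by move=> i; rewrite -sum1_card big_mkcond.
under [RHS]eq_bigr => i _ do rewrite E.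
rewrite bigA_distr_bigA /= -sum1_card big_mkcond /=.
by apply: eq_bigr => f _; rewrite prod_nat_bool inE; case: ifP.
Qed.

Definition prel (X : finType) (T : eqType) (f : X -> T * T) : rel X :=
  fun x y => (f x == f y) || (f x == ((f y).2, (f y).1)).
Arguments prel {X T} f x y.

Lemma prelP (X : finType) (T : eqType) (f : X -> T * T) x y :
  reflect (f x = f y \/ f x = ((f y).2, (f y).1)) (prel f x y).
Proof. by apply: (iffP orP) => -[/eqP|/eqP]; auto. Qed.

Lemma prel_refl (X : finType) (T : eqType) (f : X -> T * T) x : prel f x x.
Proof. by rewrite /prel eqxx. Qed.

Lemma prel_sym (X : finType) (T : eqType) (f : X -> T * T) x y :
  prel f x y -> prel f y x.
Proof.
move/prelP => [E|E]; apply/prelP; rewrite E; first by left.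
by right; case: (f y).
Qed.

Lemma prel_trans (X : finType) (T : eqType) (f : X -> T * T) x y z :
  prel f x y -> prel f y z -> prel f x z.
Proof.
move/prelP => [E1|E1] /prelP [E2|E2]; apply/prelP; rewrite E1 E2;
 case: (f z) => a b /=; auto.
Qed.

Lemma prel_equiv (X : finType) (T : eqType) (f : X -> T * T) :
  {in [set: X] & &, equivalence_rel (prel f)}.
Proof.
move=> x y z _ _ _; split; first exact: prel_refl.
move=> Hxy; apply/idP/idP => H.
  exact: prel_trans (prel_sym Hxy) H.
exact: prel_trans Hxy H.
Qed.

Lemma in_class (X : finType) (T : eqType) (f : X -> T * T) C x y :
  C \in equivalence_partition (prel f) [set: X] -> x \in C -> y \in C ->
  prel f x y.
Proof.
move=> /imsetP [z _ ->]; rewrite !inE /= => Hx Hy.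
exact: prel_trans (prel_sym Hx) Hy.
Qed.

Lemma class_mem (X : finType) (T : eqType) (f : X -> T * T) x :
  [set y in [set: X] | prel f x y] \in equivalence_partition (prel f) [set: X].
Proof. by apply: imset_f; rewrite inE. Qed.

Lemma pair_det (T : Type) (p1 p2 q : T * T) : p1.1 = p2.1 ->
  (p1 = q \/ p1 = (q.2, q.1)) -> (p2 = q \/ p2 = (q.2, q.1)) -> p1.2 = p2.2.
Proof.
case: p1 => a1 b1; case: p2 => a2 b2; case: q => a b /= E.
by case=> -[E1 E2]; case=> -[E3 E4]; subst.
Qed.
Lemma size_block n h d s (I : seq 'I_n) :
  s < d -> size I = h * d -> size (block n h s I) = h.
Proof.
move=> sd sI; rewrite /block size_takel // size_drop sI.
by rewrite [h * d]mulnC -mulnBl leq_pmull // subn_gt0.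
Qed.

Lemma blocks_eq n h d (t1 t2 : seq 'I_n) : size t1 = h * d -> size t2 = h * d ->
  (forall s, s < d -> block n h s t1 = block n h s t2) -> t1 = t2.
Proof.
case: t1 => [|x0 t1'] s1 s2 Hb.
  by move: s2 Hb; rewrite -s1; case: t2.
set t1 := x0 :: t1' in s1 Hb *.
apply: (eq_from_nth (x0 := x0)); first by rewrite s1 s2.
move=> i; rewrite s1 => ih.
have h0 : 0 < h by case: h ih s1 {Hb s2} => //; rewrite mul0n.
have sd : i %/ h < d by rewrite ltn_divLR // mulnC.
have uh : i %% h < h by rewrite ltn_pmod.
have := congr1 (fun t => nth x0 t (i %% h)) (Hb _ sd).
rewrite /block !nth_take // !nth_drop.
by rewrite -divn_eq.
Qed.

Lemma block_permute n m' h s (sg : 'S_m') (I : m'.-tuple 'I_n) :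
  block n h s (permute n m' sg I) = map (tnth I) (block m' h s [tuple sg j | j < m']).
Proof. by rewrite /block /permute map_take map_drop /= -map_comp. Qed.

Lemma block_sizeP m' h d (s : 'I_d) (t : (h * d).-tuple 'I_m') :
  size (block m' h s t) == h.
Proof. by rewrite (size_block (ltn_ord s)) ?size_tuple. Qed.

Definition idx k d (sg : 'S_(k./2 * d)) (s : 'I_d) : (k./2).-tuple 'I_(k./2 * d) :=
  Tuple (block_sizeP s [tuple sg j | j < k./2 * d]).
Arguments idx : clear implicits.

Definition rep (X : finType) (x0 : X) (C : {set X}) := odflt x0 [pick x in C].

Lemma rep_mem (X : finType) (x0 : X) (C : {set X}) x : x \in C -> rep x0 C \in C.
Proof. by rewrite /rep; case: pickP => [y Hy|H] Hx //=; rewrite H in Hx. Qed.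

Definition code k d L (x0 : 'I_L * 'I_d) (Q : {set {set 'I_L * 'I_d}})
  (sgs : {ffun 'I_L -> 'S_(k./2 * d)}) : {ffun 'I_#|Q| -> (k./2).-tuple 'I_(k./2 * d)} :=
  [ffun i => idx k d (sgs (rep x0 (enum_val i)).1) (rep x0 (enum_val i)).2].

Lemma code_det n k d L x0 Is Q sgs1 sgs2 :
  Par n k d L Is (idperms L _) sgs1 = Q -> Par n k d L Is (idperms L _) sgs2 = Q ->
  code x0 Q sgs1 = code x0 Q sgs2 ->
  forall j, permute n _ (sgs1 j) (Is (ordS j)) = permute n _ (sgs2 j) (Is (ordS j)).
Proof.
move=> P1 P2 Ec j; apply: val_inj.
apply: (blocks_eq (h := k./2) (d := d)); [exact: size_tuple|exact: size_tuple|move=> s sd].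
set x := (j, Ordinal sd).
set f1 := pairAB n k d L Is (idperms L _) sgs1.
set f2 := pairAB n k d L Is (idperms L _) sgs2.
change ((f1 x).2 = (f2 x).2).
set C := [set y in [set: 'I_L * 'I_d] | prel f1 x y].
have CQ : C \in Q by rewrite -P1; apply: class_mem.
have xC : x \in C by rewrite /C !inE /= prel_refl.
have yC := rep_mem x0 xC; set y := rep x0 C in yC.
have CQ1 := CQ; rewrite -P1 in CQ1.
have CQ2 := CQ; rewrite -P2 in CQ2.
have H1 := in_class CQ1 xC yC.
have H2 := in_class CQ2 xC yC.
have := congr1 (fun c : {ffun 'I_#|Q| -> _} => val (c (enum_rank_in CQ C))) Ec.
rewrite !ffunE (enum_rankK_in CQ CQ) /= -/y => Eb.
have Fy : f1 y = f2 y.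
  rewrite /f1 /f2 /pairAB; congr (_, _).
  by rewrite !block_permute Eb.
apply: (pair_det (p1 := f1 x) (p2 := f2 x) (q := f1 y)) => //.
  exact/prelP.
by rewrite Fy; apply/prelP.
Qed.
Lemma card_sgs n k d L (x0 : 'I_L * 'I_d) Is Q :
  #|[set sgs | Par n k d L Is (idperms L _) sgs == Q]| <=
  ((k./2 * d) ^ k./2) ^ #|Q| * \prod_(j < L) histfact n (Is j).
Proof.
set S := [set _ | _].
rewrite (card_by_fun S (code x0 Q)).
set H := \prod_(j < L) histfact n (Is j).
apply: (@leq_trans (\sum_(c : {ffun 'I_#|Q| -> (k./2).-tuple 'I_(k./2 * d)}) H)).
  apply: leq_sum => c _.
  set Fc := [set x in S | code x0 Q x == c].
  have [->|[s0 Hs0]] := set_0Vmem Fc; first by rewrite cards0.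
  have Hs0' := Hs0; rewrite !inE in Hs0'; case/andP: Hs0' => /eqP P0 /eqP C0.
  pose P := fun (j : 'I_L) (sg : 'S_(k./2 * d)) =>
    permute n _ sg (Is (ordS j)) == permute n _ (s0 j) (Is (ordS j)).
  apply: (@leq_trans #|[set sgs : {ffun 'I_L -> 'S_(k./2 * d)} | [forall j, P j (sgs j)]]|).
    apply/subset_leq_card/subsetP => sg; rewrite !inE => /andP [/eqP P1 /eqP C1].
    apply/forallP => j; apply/eqP; apply: (code_det (x0 := x0) P1 P0 _ j).
    by rewrite C1 C0.
  rewrite card_ffun_pred /H [X in _ <= X](reindex_inj (@ordS_inj _)) /=.
  apply: leq_prod => j _.
  apply: leq_trans (card_fib _ _ (Is (ordS j)) (permute n _ (s0 j) (Is (ordS j)))).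
  by apply/subset_leq_card/subsetP => sg; rewrite !inE.
by rewrite sum_nat_const card_ffun card_tuple !card_ord.
Qed.
Import Order.TTheory GRing.Theory Num.Theory.
Local Open Scope ring_scope.

Section Prob.
Variables (R : realFieldType) (n k : nat) (p : R).

Definition Tb (b1 b2 : bool) : R := if b1 then (if b2 then 1 else -1) else 0.
Definition Tt (w : outcome n k) (t : k.-tuple 'I_n) : R := Tb (w.1 t) (w.2 t).
Definition mom (e : nat) : R := if e == 0%N then 1 else if odd e then 0 else p.

Lemma expect_ext (X Y : outcome n k -> R) : (forall w, X w = Y w) ->
  expect R n k p X = expect R n k p Y.
Proof. by move=> H; apply: eq_bigr => w _; rewrite H. Qed.

Lemma expect_sum (I : finType) (F : I -> outcome n k -> R) :
  expect R n k p (fun w => \sum_i F i w) = \sum_i expect R n k p (F i).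
Proof.
rewrite /expect exchange_big /=; apply: eq_bigr => w _; by rewrite mulr_sumr.
Qed.

Lemma expect_scale a (X : outcome n k -> R) :
  expect R n k p (fun w => a * X w) = a * expect R n k p X.
Proof.
rewrite /expect mulr_sumr; apply: eq_bigr => w _; by rewrite mulrCA.
Qed.

Lemma expect_prod (G : k.-tuple 'I_n -> bool -> bool -> R) :
  expect R n k p (fun w => \prod_t G t (w.1 t) (w.2 t)) =
  \prod_t \sum_b1 \sum_b2 ((if b1 then p else 1 - p) * 2^-1 * G t b1 b2).
Proof.
rewrite /expect /prob_outcome.
transitivity (\sum_(w1 : {ffun k.-tuple 'I_n -> bool}) \sum_(w2 : {ffun k.-tuple 'I_n -> bool})
   \prod_t ((if w1 t then p else 1 - p) * 2^-1 * G t (w1 t) (w2 t))).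
  rewrite pair_big /=; apply: eq_bigr => -[w1 w2] _ /=.
  rewrite -big_split //=.
symmetry; rewrite bigA_distr_bigA /=; apply: eq_bigr => w1 _.
by rewrite bigA_distr_bigA.
Qed.

Lemma sum_mom e :
  \sum_b1 \sum_b2 ((if b1 then p else 1 - p) * 2^-1 * Tb b1 b2 ^+ e) = mom e.
Proof.
rewrite !big_bool /= /mom /Tb.
case: e => [|e]; rewrite ?expr0 ?expr0n /=.
  by rewrite !mulr1 -!mulrDl; field.
rewrite expr1n -signr_odd /=; case: (odd e) => /=; rewrite ?expr0 ?expr1 !mulr0.
all: field; done.
Qed.

Lemma expect_mono (X : finType) (tt : X -> k.-tuple 'I_n) :
  expect R n k p (fun w => \prod_x Tt w (tt x)) =
  \prod_t mom #|[set x | tt x == t]|.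
Proof.
transitivity (expect R n k p (fun w => \prod_t Tb (w.1 t) (w.2 t) ^+ #|[set x | tt x == t]|)).
  apply: expect_ext => w; rewrite (partition_big tt predT) //=.
  apply: eq_bigr => t _; rewrite -prodr_const.
  apply: eq_big => [x|x]; first by rewrite inE.
  by move=> /eqP <-.
rewrite (expect_prod (fun t b1 b2 => Tb b1 b2 ^+ #|[set x | tt x == t]|)).
apply: eq_bigr => t _; exact: sum_mom.
Qed.


Lemma pair_eq_comp (T : eqType) (u v : T * T) : (u == v) = (u.1 == v.1) && (u.2 == v.2).
Proof. by case: u v => ? ? [? ?]. Qed.

Lemma prod_mom_le (tt : k.-tuple 'I_n -> nat) : 0 <= p <= 1 ->
  \prod_t mom (tt t) <= p ^+ #|[set t | tt t != 0%N]|.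
Proof.
case/andP=> p0 p1.
rewrite (bigID (fun t => tt t == 0%N)) /= big1 => [|t /eqP->]; last by rewrite /mom.
rewrite mul1r -prodr_const.
have -> : \prod_(t in [set t | tt t != 0%N]) p = \prod_(t | tt t != 0%N) p.
  by apply: eq_bigl => t; rewrite inE.
apply: ler_prod => t /negbTE H; rewrite /mom H.
by case: ifP => _; rewrite ?p0 ?lexx.
Qed.

Lemma prod_mom_odd (tt : k.-tuple 'I_n -> nat) t : odd (tt t) ->
  \prod_t mom (tt t) = 0.
Proof.
move=> H; rewrite (bigD1 t) //= /mom H.
by case: ifP => [/eqP E|_]; [rewrite E in H | rewrite mul0r].
Qed.

Section Core.
Variables (X : finType) (f : X -> seq 'I_n * seq 'I_n) (h : nat) (t0 : k.-tuple 'I_n).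
Hypothesis hk : (h + h)%N = k.
Hypothesis hs : forall x, size (f x).1 = h /\ size (f x).2 = h.

Definition t1 x := insubd t0 ((f x).1 ++ (f x).2).
Definition t2 x := insubd t0 ((f x).2 ++ (f x).1).
Definition ttc (c : {ffun X -> bool}) x := if c x then t1 x else t2 x.

Lemma eqt (a b a' b' : seq 'I_n) : size a = h -> size b = h -> size a' = h -> size b' = h ->
  (insubd t0 (a ++ b) == insubd t0 (a' ++ b')) = (a == a') && (b == b').
Proof.
move=> sa sb sa' sb'; rewrite -val_eqE !insubdK ?eqseq_cat ?sa ?sa' //;
  by rewrite -topredE /= size_cat ?sa ?sb ?sa' ?sb' hk.
Qed.

Lemma key c x0 x : prel f x0 x = (ttc c x == t1 x0) || (ttc c x == t2 x0).
Proof.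
have [s1 s2] := hs x; have [s3 s4] := hs x0.
rewrite /prel /ttc /t1 /t2 !pair_eq_comp /=.
case: (c x); rewrite !eqt //.
  rewrite !(eq_sym (f x0).1) !(eq_sym (f x0).2); congr (_ || _); exact: andbC.
rewrite !(eq_sym (f x0).1) !(eq_sym (f x0).2) orbC; congr (_ || _); exact: andbC.
Qed.

Definition Qf := equivalence_partition (prel f) [set: X].

Lemma odd_class c C : C \in Qf -> odd #|C| ->
  exists t, odd #|[set x | ttc c x == t]|.
Proof.
move=> /imsetP [x0 _ ->] Hodd.
have E : #|[set y in [set: X] | prel f x0 y]| =
         #|[set y | (ttc c y == t1 x0) || (ttc c y == t2 x0)]|.
  by apply: eq_card => y; rewrite !inE (key c).
rewrite E in Hodd.
case E12: (t1 x0 == t2 x0).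
  exists (t1 x0); move: Hodd; congr (odd _); apply: eq_card => y.
  by rewrite !inE (eqP E12) orbb.
have E2 : [set y | (ttc c y == t1 x0) || (ttc c y == t2 x0)] =
   [set y | ttc c y == t1 x0] :|: [set y | ttc c y == t2 x0].
  by apply/setP => y; rewrite !inE.
have E3 : [set y | ttc c y == t1 x0] :&: [set y | ttc c y == t2 x0] = set0.
  apply/setP => y; rewrite !inE; case: eqP => // ->; by rewrite E12.
rewrite E2 cardsU E3 cards0 subn0 oddD in Hodd.
case O1 : (odd #|[set y | ttc c y == t1 x0]|); first by exists (t1 x0).
by exists (t2 x0); rewrite O1 in Hodd.
Qed.

Lemma supp_ge c : (#|Qf| <= #|[set t | #|[set x | ttc c x == t]| != 0%N]|)%N.
Proof.
pose g (C : {set X}) := odflt t0 (omap (ttc c) [pick y in C]).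
have gP : forall C, C \in Qf -> exists2 y, y \in C & g C = ttc c y.
  move=> C /imsetP [x0 _ ->]; rewrite /g; case: pickP => [y Hy|H] /=.
    by exists y.
  by have := H x0; rewrite !inE prel_refl.
have ginj : {in Qf &, injective g}.
  move=> C1 C2 H1 H2; have [y1 y1C E1] := gP _ H1; have [y2 y2C E2] := gP _ H2.
  rewrite E1 E2 => Et.
  move: H1 H2 y1C y2C => /imsetP [x1 _ ->] /imsetP [x2 _ ->]; rewrite !inE /= => r1 r2.
  have r12 : prel f y1 y2 by rewrite (key c) -Et /ttc; case: (c y1); rewrite eqxx ?orbT.
  have r : prel f x1 x2 := prel_trans (prel_trans r1 r12) (prel_sym r2).
  apply/setP => z; rewrite !inE /=; apply/idP/idP => H.
    exact: prel_trans (prel_sym r) H.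
  exact: prel_trans r H.
rewrite -(card_in_imset ginj); apply/subset_leq_card/subsetP => _ /imsetP [C HC ->].
have [y yC ->] := gP _ HC; rewrite inE -lt0n; apply/card_gt0P; exists y; by rewrite inE.
Qed.

End Core.

Lemma tensorT_seq (t0 : k.-tuple 'I_n) w (s : seq 'I_n) : size s == k ->
  tensorT R n k w s = Tt w (insubd t0 s).
Proof.
move=> hs; rewrite /tensorT /insubd /Tt /Tb; case: insubP => [u _ _|] //=.
by rewrite hs.
Qed.

Lemma core (X : finType) (f : X -> seq 'I_n * seq 'I_n) (h : nat) :
  (h + h)%N = k -> (forall x, size (f x).1 = h /\ size (f x).2 = h) -> (0 < n)%N ->
  0 <= p <= 1 ->
  expect R n k p (fun w => \prod_x Sphi R n k w (f x).1 (f x).2) <=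
  (if [forall C in equivalence_partition (prel f) [set: X], ~~ odd #|C|]
   then p ^+ #|equivalence_partition (prel f) [set: X]| else 0).
Proof.
move=> hk hs n0 hp.
pose t0 : k.-tuple 'I_n := [tuple Ordinal n0 | _ < k].
set G := (if _ then _ else _).
have hsz : forall a b : seq 'I_n, size a = h -> size b = h -> size (a ++ b) == k.
  by move=> a b sa sb; rewrite size_cat sa sb hk.
have E1 : forall w, \prod_x Sphi R n k w (f x).1 (f x).2 =
   \sum_(c : {ffun X -> bool}) (2^-1 ^+ #|X| * \prod_x Tt w (ttc f t0 c x)).
  move=> w.
  have Es : forall x, Sphi R n k w (f x).1 (f x).2 =
      \sum_(b : bool) (2^-1 * Tt w (if b then t1 f t0 x else t2 f t0 x)).
    move=> x; have [s1 s2] := hs x.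
    rewrite big_bool /Sphi /Mphi /= (tensorT_seq t0 w (hsz _ _ s1 s2)).
    rewrite (tensorT_seq t0 w (hsz _ _ s2 s1)).
    by rewrite mulrDl !(mulrC _ 2^-1).
  under eq_bigr => x _ do rewrite Es.
  rewrite bigA_distr_bigA; apply: eq_bigr => c _.
  by rewrite big_split prodr_const /ttc.
rewrite (expect_ext E1) expect_sum.
under eq_bigr => c _ do rewrite expect_scale expect_mono.
apply: (@le_trans _ _ (\sum_(c : {ffun X -> bool}) (2^-1 ^+ #|X| * G))).
  apply: ler_sum => c _; apply: ler_wpM2l; first by rewrite exprn_ge0 // invr_ge0.
  rewrite /G; case: ifP => [_ | /negbT /forallPn [C]].
    apply: le_trans (prod_mom_le _ hp) _.
    case/andP: hp => p0 p1; apply: ler_wiXn2l => //.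
    exact: (supp_ge t0 hk hs c).
  rewrite negb_imply negbK => /andP [CQ Codd].
  have [t Ht] := odd_class t0 hk hs c CQ Codd.
  by rewrite (prod_mom_odd Ht).
rewrite sumr_const card_ffun card_bool -mulrnAl -mulr_natr natrX -exprMn mulVf ?expr1n ?mul1r //.
by rewrite pnatr_eq0.
Qed.

End Prob.
Section Trace.
Variable (R : comPzRingType).

Lemma sum_tuple_cons (T : finType) L (F : L.+1.-tuple T -> R) :
  \sum_t F t = \sum_x \sum_(t : L.-tuple T) F [tuple of x :: t].
Proof.
rewrite pair_big /=.
rewrite (reindex (fun p : T * L.-tuple T => [tuple of p.1 :: p.2])) //=.
exists (fun t : L.+1.-tuple T => (thead t, [tuple of behead t])).
  by move=> [x t] _; congr pair; apply: val_inj.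
by move=> t _; rewrite [RHS]tuple_eta.
Qed.

Lemma pow_path N (M : 'M[R]_N) L a b :
  (M ^+ L.+1) a b = \sum_(t : L.-tuple 'I_N)
     \prod_(j < L.+1) M (nth b (a :: t) j) (nth b (a :: t) j.+1).
Proof.
elim: L a b => [|L IH] a b.
  rewrite expr1 (big_pred1 [tuple]) => [|t]; last by rewrite [t]tuple0 /= eqxx.

  by rewrite big_ord1.
rewrite exprS -mulmxE mxE.
rewrite (sum_tuple_cons (fun t : L.+1.-tuple 'I_N => \prod_(j < L.+2) M (nth b (a :: t) j) (nth b (a :: t) j.+1))).
apply: eq_bigr => x _.
rewrite IH mulr_sumr; apply: eq_bigr => t _.
by rewrite [RHS]big_ord_recl.
Qed.

Lemma tr_pow N (M : 'M[R]_N) L : (0 < L)%N ->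
  \tr (M ^+ L) = \sum_(f : {ffun 'I_L -> 'I_N}) \prod_(j < L) M (f j) (f (ordS j)).
Proof.
case: L => // L _.
rewrite /mxtrace.
under eq_bigr => a _ do rewrite pow_path.
rewrite pair_big /=.
pose g (f : {ffun 'I_L.+1 -> 'I_N}) := (f ord0, [tuple f (lift ord0 j) | j < L]).
have gnth : forall f (i : 'I_L.+1), nth (g f).1 ((g f).1 :: (g f).2) i = f i.
  move=> f [[|i] Hi] /=; first by congr (f _); apply: val_inj.
  have iL : (i < L)%N := Hi.
  rewrite (nth_map (Ordinal iL)) ?size_enum_ord //.
  by congr (f _); apply: val_inj; rewrite /= nth_enum_ord.
rewrite (reindex g) /=; last first.
  exists (fun p : 'I_N * L.-tuple 'I_N => [ffun i : 'I_L.+1 => nth p.1 (p.1 :: p.2) i]).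
    by move=> f _; apply/ffunP => i; rewrite ffunE gnth.
  move=> [a t] _; rewrite /g /= ffunE /=; congr pair.
  apply: eq_from_tnth => j.
  by rewrite tnth_mktuple ffunE /= (tnth_nth a).
apply: eq_bigr => f _; apply: eq_bigr => j _.
rewrite gnth; congr (M _ _).
case: (ltnP j L) => jL.
  have -> : ordS j = lift ord0 (Ordinal jL) by apply: val_inj; rewrite /= modn_small.
  rewrite -(gnth f (lift ord0 (Ordinal jL))) //.
have jE : j = ord_max by apply: val_inj; apply/eqP; rewrite eqn_leq jL -ltnS ltn_ord.
rewrite jE /= nth_default /=; last by rewrite size_map size_enum_ord.
by congr (f _); apply: val_inj; rewrite /= modnn.
Qed.
End Trace.

Lemma eqpart (X : finType) (R1 R2 : rel X) (D : {set X}) : R1 =2 R2 ->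
  equivalence_partition R1 D = equivalence_partition R2 D.
Proof.
move=> H; rewrite /equivalence_partition; apply: eq_imset => x.
by apply/setP => y; rewrite !inE H.
Qed.

Lemma permute1 n m (I : m.-tuple 'I_n) : permute n m 1%g I = I.
Proof. by apply: eq_from_tnth => i; rewrite tnth_mktuple perm1. Qed.

Lemma Par_reindex n k d L Is pis sgs :
  Par n k d L Is pis sgs =
  Par n k d L [ffun j => permute n _ (pis j) (Is j)] (idperms L _)
              [ffun j => (sgs j * (pis (ordS j))^-1)%g].
Proof.
apply: eqpart => x y.
have E : forall z, pairAB n k d L Is pis sgs z =
   pairAB n k d L [ffun j => permute n _ (pis j) (Is j)] (idperms L _)
              [ffun j => (sgs j * (pis (ordS j))^-1)%g] z.
  move=> z; rewrite /pairAB /idperms !ffunE permute1; congr (_, block _ _ _ _).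
  apply/(congr1 val)/eq_from_tnth => i; rewrite !tnth_mktuple permM permKV //.
by rewrite /ParRel !E.
Qed.

Lemma sum_reindex (R : realFieldType) n k d L (F : {set {set 'I_L * 'I_d}} -> R) :
  \sum_(Is : {ffun 'I_L -> (k./2 * d).-tuple 'I_n})
    \sum_(pis : {ffun 'I_L -> 'S_(k./2 * d)}) \sum_(sgs : {ffun 'I_L -> 'S_(k./2 * d)})
      F (Par n k d L Is pis sgs) =
  ((k./2 * d)`!%:R ^+ L) *
  \sum_(Is : {ffun 'I_L -> (k./2 * d).-tuple 'I_n}) \sum_(sgs : {ffun 'I_L -> 'S_(k./2 * d)})
      F (Par n k d L Is (idperms L _) sgs).
Proof.
rewrite exchange_big /=.
transitivity (\sum_(pis : {ffun 'I_L -> 'S_(k./2 * d)})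
  \sum_(Is : {ffun 'I_L -> (k./2 * d).-tuple 'I_n}) \sum_(sgs : {ffun 'I_L -> 'S_(k./2 * d)})
      F (Par n k d L Is (idperms L _) sgs)); last first.
  by rewrite sumr_const card_ffun card_Sn card_ord -[LHS]mulr_natl natrX.
apply: eq_bigr => pis _.
under eq_bigr => Is _ do under eq_bigr => sgs _ do rewrite Par_reindex.
have inj1 : injective (fun Is : {ffun 'I_L -> (k./2 * d).-tuple 'I_n} =>
                           [ffun j => permute n _ (pis j) (Is j)]).
  move=> I1 I2 /ffunP E; apply/ffunP => j; have := E j.
  rewrite !ffunE => E2; apply: eq_from_tnth => i.
  have := congr1 (fun t => tnth t ((pis j)^-1 i)%g) E2.
  by rewrite !tnth_mktuple permKV.
have inj2 : injective (fun sgs : {ffun 'I_L -> 'S_(k./2 * d)} =>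
                           [ffun j => (sgs j * (pis (ordS j))^-1)%g]).
  move=> s1 s2 /ffunP E; apply/ffunP => j; have := E j.
  by rewrite !ffunE => /mulIg.
rewrite [RHS](reindex_inj inj1) /=; apply: eq_bigr => Is _.
by rewrite [RHS](reindex_inj inj2).
Qed.

Definition Gb (R : realFieldType) (p : R) (X : finType) (Q : {set {set X}}) : R :=
  if [forall C in Q, ~~ odd #|C|] then p ^+ #|Q| else 0.

Lemma step5 (R : realFieldType) n k d l (p : R) (x0 : 'I_(2 * l) * 'I_d) : 0 <= p ->
  \sum_(Is : {ffun 'I_(2 * l) -> (k./2 * d).-tuple 'I_n})
    \sum_(sgs : {ffun 'I_(2 * l) -> 'S_(k./2 * d)})
      Gb p (Par n k d (2 * l) Is (idperms (2 * l) _) sgs) <=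
  \sum_(Q : {set {set 'I_(2 * l) * 'I_d}} | even_partition (2 * l) d Q)
     (p ^+ #|Q| *
      \sum_(Is : {ffun 'I_(2 * l) -> (k./2 * d).-tuple 'I_n} | Qvalid n k d (2 * l) Q Is)
        ((((k./2 * d) ^ k./2) ^ #|Q| * \prod_(j < 2 * l) histfact n (Is j))%N%:R)).
Proof.
move=> p0.
set b := fun (Q : {set {set 'I_(2 * l) * 'I_d}}) (Is : {ffun 'I_(2 * l) -> (k./2 * d).-tuple 'I_n}) =>
  ((((k./2 * d) ^ k./2) ^ #|Q| * \prod_(j < 2 * l) histfact n (Is j))%N%:R : R).
have B : forall Is Q,
  \sum_(sgs : {ffun 'I_(2 * l) -> 'S_(k./2 * d)} | Par n k d (2 * l) Is (idperms (2 * l) _) sgs == Q)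
     Gb p Q <=
  (if even_partition (2 * l) d Q then p ^+ #|Q| * (if Qvalid n k d (2 * l) Q Is then b Q Is else 0)
   else 0).
  move=> Is Q.
  set S := [set sgs : {ffun 'I_(2 * l) -> 'S_(k./2 * d)} |
              Par n k d (2 * l) Is (idperms (2 * l) _) sgs == Q].
  have -> : \sum_(sgs : {ffun 'I_(2 * l) -> 'S_(k./2 * d)} |
               Par n k d (2 * l) Is (idperms (2 * l) _) sgs == Q) Gb p Q = Gb p Q *+ #|S|.
    by rewrite -sumr_const; apply: eq_bigl => s; rewrite inE.
  have [->|[s0 Hs0]] := set_0Vmem S.
    rewrite cards0 mulr0n; case: ifP => _ //; case: ifP => _; rewrite ?mulr0 //.
    by rewrite mulr_ge0 ?exprn_ge0 ?ler0n.
  have Hs0' := Hs0; rewrite inE in Hs0'.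
  have part : partition Q [set: 'I_(2 * l) * 'I_d].
    by rewrite -(eqP Hs0'); apply: equivalence_partitionP; exact: prel_equiv.
  have qv : Qvalid n k d (2 * l) Q Is by apply/existsP; exists s0.
  rewrite /even_partition part qv /Gb /=; case: ifP => _; last by rewrite mul0rn.
  rewrite -mulr_natr ler_wpM2l ?exprn_ge0 // /b ler_nat.
  exact: card_sgs x0 Is Q.
apply: (@le_trans _ _ (\sum_(Is : {ffun 'I_(2 * l) -> (k./2 * d).-tuple 'I_n})
          \sum_(Q : {set {set 'I_(2 * l) * 'I_d}})
  (if even_partition (2 * l) d Q then p ^+ #|Q| * (if Qvalid n k d (2 * l) Q Is then b Q Is else 0)
   else 0))).
  apply: ler_sum => Is _.
  rewrite (partition_big (fun sgs => Par n k d (2 * l) Is (idperms (2 * l) _) sgs) predT) //=.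
  apply: ler_sum => Q _.
  apply: le_trans (B Is Q).
  by rewrite le_eqVlt; apply/orP; left; apply/eqP; apply: eq_bigr => sgs /eqP ->.
rewrite exchange_big /= [X in _ <= X]big_mkcond /=.
apply: ler_sum => Q _.
case: ifP => _; last by rewrite big1.
rewrite mulr_sumr [X in _ <= X]big_mkcond /=; apply: ler_sum => Is _.
by case: ifP => _; rewrite ?mulr0.
Qed.

Unset Implicit Arguments.
Theorem mainTheorem4 (R : realFieldType) (n k d l : nat) (p : R) :
  ~~ odd k -> (0 < d)%N -> (0 < l)%N -> (0 < n)%N -> 0 <= p <= 1 ->
  expect R n k p (fun w : outcome n k => \tr (Rmat R n k d w ^+ (2 * l)))
  <= (((k./2 * d)`!)%:R ^+ (2 * l))^-1 *
     \sum_(Q : {set {set 'I_(2 * l) * 'I_d}} | even_partition (2 * l) d Q)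
        ((p * ((k./2 * d)%:R) ^+ k./2) ^+ #|Q| *
         \sum_(Is : {ffun 'I_(2 * l) -> (k./2 * d).-tuple 'I_n} | Qvalid n k d (2 * l) Q Is)
            \prod_(j < 2 * l) (histfact n (Is j))%:R).
Proof.
move=> evk d0 l0 n0 hp.
have L0 : (0 < 2 * l)%N by rewrite muln_gt0.
have hk : (k./2 + k./2)%N = k.
  by rewrite addnn -[RHS](odd_double_half k) (negbTE evk).
pose c : R := (((k./2 * d)`!)%:R ^+ 2)^-1.
pose x0 : 'I_(2 * l) * 'I_d := (Ordinal L0, Ordinal d0).
have p0 : 0 <= p by case/andP: hp.
have E1 : forall w, \tr (Rmat R n k d w ^+ (2 * l)) =
  \sum_(Is : {ffun 'I_(2 * l) -> (k./2 * d).-tuple 'I_n})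
    (c ^+ (2 * l) * \sum_(pis : {ffun 'I_(2 * l) -> 'S_(k./2 * d)})
        \sum_(sgs : {ffun 'I_(2 * l) -> 'S_(k./2 * d)})
          \prod_(x : 'I_(2 * l) * 'I_d)
             Sphi R n k w (pairAB n k d (2 * l) Is pis sgs x).1
                          (pairAB n k d (2 * l) Is pis sgs x).2).
  move=> w; rewrite tr_pow //.
  rewrite (reindex (fun Is : {ffun 'I_(2 * l) -> (k./2 * d).-tuple 'I_n} =>
                      [ffun j => enum_rank (Is j)])) /=; last first.
    exists (fun f : {ffun 'I_(2 * l) -> 'I_#|{: (k./2 * d).-tuple 'I_n}|} =>
              [ffun j => enum_val (f j)]) => g _; apply/ffunP => j;
      by rewrite !ffunE ?enum_rankK ?enum_valK.
  apply: eq_bigr => Is _.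
  under eq_bigr => j _ do rewrite /Rmat mxE !ffunE !enum_rankK /RphiD.
  rewrite big_split /= prodr_const card_ord; congr (_ * _).
  rewrite bigA_distr_bigA; apply: eq_bigr => pis _.
  rewrite bigA_distr_bigA; apply: eq_bigr => sgs _.
  by rewrite /SphiD pair_big /=; apply: eq_bigr => -[j s] _.
rewrite (expect_ext p E1) (expect_sum p).
apply: (@le_trans _ _ (\sum_(Is : {ffun 'I_(2 * l) -> (k./2 * d).-tuple 'I_n})
    (c ^+ (2 * l) * \sum_(pis : {ffun 'I_(2 * l) -> 'S_(k./2 * d)})
        \sum_(sgs : {ffun 'I_(2 * l) -> 'S_(k./2 * d)})
          Gb p (Par n k d (2 * l) Is pis sgs)))).
  apply: ler_sum => Is _.
  rewrite (expect_scale p _ (fun w => \sum_(pis : {ffun 'I_(2 * l) -> 'S_(k./2 * d)})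
        \sum_(sgs : {ffun 'I_(2 * l) -> 'S_(k./2 * d)})
          \prod_(x : 'I_(2 * l) * 'I_d)
             Sphi R n k w (pairAB n k d (2 * l) Is pis sgs x).1
                          (pairAB n k d (2 * l) Is pis sgs x).2)).
  apply: ler_wpM2l; first by rewrite exprn_ge0 // invr_ge0 exprn_ge0 ?ler0n.
  rewrite (expect_sum p (fun (pis : {ffun 'I_(2 * l) -> 'S_(k./2 * d)}) w =>
        \sum_(sgs : {ffun 'I_(2 * l) -> 'S_(k./2 * d)})
          \prod_(x : 'I_(2 * l) * 'I_d)
             Sphi R n k w (pairAB n k d (2 * l) Is pis sgs x).1
                          (pairAB n k d (2 * l) Is pis sgs x).2)).
  apply: ler_sum => pis _.
  rewrite (expect_sum p (fun (sgs : {ffun 'I_(2 * l) -> 'S_(k./2 * d)}) w =>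
          \prod_(x : 'I_(2 * l) * 'I_d)
             Sphi R n k w (pairAB n k d (2 * l) Is pis sgs x).1
                          (pairAB n k d (2 * l) Is pis sgs x).2)).
  apply: ler_sum => sgs _.
  apply: (core (h := k./2)) => // x; rewrite /pairAB.
  by split; apply: (size_block (ltn_ord _)); exact: size_tuple.
rewrite -mulr_sumr sum_reindex mulrA.
have -> : c ^+ (2 * l) * (k./2 * d)`!%:R ^+ (2 * l) = ((k./2 * d)`!%:R ^+ (2 * l))^-1.
  rewrite -exprMn -exprVn; congr (_ ^+ _).
  rewrite /c -[X in _ * X]invrK -invfM expr2 mulrK //.
  by rewrite unitfE pnatr_eq0 -lt0n fact_gt0.
apply: ler_wpM2l; first by rewrite invr_ge0 exprn_ge0 // ler0n.
apply: (le_trans (step5 n k x0 p0)).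
rewrite le_eqVlt; apply/orP; left; apply/eqP.
apply: eq_bigr => Q _.
rewrite exprMn -mulrA; congr (_ * _).
rewrite mulr_sumr; apply: eq_bigr => Is _.
by rewrite natrM !natrX natr_prod.
Qed.
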